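(* Suppose Assumption A1 holds and $F^*>-\infty$. Then Algorithm (1-RCD), with indices $i_k$ drawn i.i.d. from the uniform distribution on $\{1,\dots,N\}$, generates a sequence $x^k$ satisfying, for all $k\ge0$, $$\min_{0\le l\le k} E\left[\left(M_1(x^l,L)\right)^2\right]\le \frac{2N\,(F(x^0)-F^* )}{k+1},$$ where the expectation is over the random index choices.
   Context: Block structure: $n=\sum_{i=1}^N n_i$, $I_n=[U_1\ \dots\ U_N]$ with $U_i\in\mathbb{R}^{n\times n_i}$, $x_i=U_i^Tx$, $\nabla_i f(x)=U_i^T\nabla f(x)$. Problem: $F^*=\min_{x\in\mathbb{R}^n}F(x):=f(x)+h(x)$. Assumption A1: (i) $f$ is differentiable and there are constants $L_i>0$ with $\|\nabla_i f(x+U_is_i)-\nabla_i f(x)\|\le L_i\|s_i\|$ for all $s_i\in\mathbb{R}^{n_i}$, $x\in\mathbb{R}^n$, $i=1,\dots,N$; (ii) $h$ is proper, convex, continuous and block separable, $h(x)=\sum_{i=1}^N h_i(x_i)$ with each $h_i:\mathbb{R}^{n_i}\to\mathbb{R}$ convex. $L=[L_1\dots L_N]^T$. Algorithm (1-RCD): given $x^0\in\mathbb{R}^n$, for $k\ge0$ choose an index $i_k\in\{1,\dots,N\}$ at random (i.i.d. across iterations), compute $d_{i_k}=\arg\min_{s\in\mathbb{R}^{n_{i_k}}}\ f(x^k)+\langle\nabla_{i_k}f(x^k),s\rangle+\frac{L_{i_k}}{2}\|s\|^2+h(x^k+U_{i_k}s)$, and set $x^{k+1}=x^k+U_{i_k}d_{i_k}$.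 Notation: $\|x\|_L=(\sum_i L_i\|x_i\|^2)^{1/2}$, $\|y\|_L^*=(\sum_i L_i^{-1}\|y_i\|^2)^{1/2}$, $D_L=\mathrm{diag}(L_1I_{n_1},\dots,L_NI_{n_N})$, $d_L(x)=\arg\min_{s\in\mathbb{R}^n} f(x)+\langle\nabla f(x),s\rangle+\frac12\|s\|_L^2+h(x+s)$, $M_1(x,L)=\|D_L d_L(x)\|_L^*$. *)

(* Defs.v *)
From Stdlib Require Import Reals Lra Lia List.
Open Scope R_scope.

(* A point of R^n = R^{n_1} x ... x R^{n_N} is represented in block form:
   x i j is the j-th coordinate of block x_i (0-based: i < N, j < nb i).
   Values outside this range are irrelevant. *)
Definition Vec := nat -> nat -> R.
Definition BVec := nat -> R.

Fixpoint fsum (n : nat) (f : nat -> R) : R :=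
  match n with O => 0 | S m => fsum m f + f m end.

Definition bnorm2 (m : nat) (s : BVec) : R := fsum m (fun j => s j ^ 2).
Definition bnorm (m : nat) (s : BVec) : R := sqrt (bnorm2 m s).
Definition binner (m : nat) (u v : BVec) : R := fsum m (fun j => u j * v j).

Definition inner (N : nat) (nb : nat -> nat) (x y : Vec) : R :=
  fsum N (fun i => binner (nb i) (x i) (y i)).
Definition vnorm (N : nat) (nb : nat -> nat) (x : Vec) : R :=
  sqrt (fsum N (fun i => bnorm2 (nb i) (x i))).

Definition vadd (x y : Vec) : Vec := fun i j => x i j + y i j.
Definition bsub (u v : BVec) : BVec := fun j => u j - v j.
Definition bcomb (t : R) (u v : BVec) : BVec := fun j => t * u j + (1 - t) * v j.

Definition upd (nb : nat -> nat) (x : Vec) (i : nat) (s : BVec) : Vec :=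
  fun i' j => if andb (Nat.eqb i' i) (Nat.ltb j (nb i)) then x i' j + s j else x i' j.

Definition has_gradient (N : nat) (nb : nat -> nat) (f : Vec -> R) (g : Vec -> Vec) : Prop :=
  forall x eps, 0 < eps -> exists delta, 0 < delta /\
    forall h, vnorm N nb h < delta ->
      Rabs (f (vadd x h) - f x - inner N nb (g x) h) <= eps * vnorm N nb h.

(* Assumption A1 (i): block-coordinatewise Lipschitz gradient *)
Definition block_lipschitz (N : nat) (nb : nat -> nat) (g : Vec -> Vec) (L : nat -> R) : Prop :=
  forall i x s, (i < N)%nat ->
    bnorm (nb i) (bsub (g (upd nb x i s) i) (g x i)) <= L i * bnorm (nb i) s.

(* hi : R^{m} -> R is a function of R^m (depends only on coordinates < m) *)
Definition block_fun (m : nat) (hi : BVec -> R) : Prop :=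
  forall u v, (forall j, (j < m)%nat -> u j = v j) -> hi u = hi v.

Definition convex_on (m : nat) (hi : BVec -> R) : Prop :=
  forall u v t, 0 <= t <= 1 -> hi (bcomb t u v) <= t * hi u + (1 - t) * hi v.

Definition continuous_on (m : nat) (hi : BVec -> R) : Prop :=
  forall u eps, 0 < eps -> exists delta, 0 < delta /\
    forall v, bnorm m (bsub v u) < delta -> Rabs (hi v - hi u) < eps.

Definition hsum (N : nat) (hb : nat -> BVec -> R) (x : Vec) : R :=
  fsum N (fun i => hb i (x i)).

(* Model minimized at iteration k for block i *)
Definition block_model (nb : nat -> nat) (f : Vec -> R) (g : Vec -> Vec)
  (h : Vec -> R) (L : nat -> R) (x : Vec) (i : nat) (s : BVec) : R :=
  f x + binner (nb i) (g x i) s + L i / 2 * bnorm2 (nb i) s + h (upd nb x i s).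

Definition Lnorm2 (N : nat) (nb : nat -> nat) (L : nat -> R) (s : Vec) : R :=
  fsum N (fun i => L i * bnorm2 (nb i) (s i)).

(* full model defining d_L(x) *)
Definition full_model (N : nat) (nb : nat -> nat) (f : Vec -> R) (g : Vec -> Vec)
  (h : Vec -> R) (L : nat -> R) (x s : Vec) : R :=
  f x + inner N nb (g x) s + / 2 * Lnorm2 N nb L s + h (vadd x s).

Definition Ldualnorm (N : nat) (nb : nat -> nat) (L : nat -> R) (y : Vec) : R :=
  sqrt (fsum N (fun i => / L i * bnorm2 (nb i) (y i))).

Definition DL (L : nat -> R) (d : Vec) : Vec := fun i j => L i * d i j.

Definition M1 (N : nat) (nb : nat -> nat) (L : nat -> R) (dL : Vec -> Vec) (x : Vec) : R :=
  Ldualnorm N nb L (DL L (dL x)).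

(* Run of 1-RCD along the index list i_0, i_1, ..., using block step D *)
Fixpoint rcd_run (nb : nat -> nat) (D : Vec -> nat -> BVec) (x : Vec) (w : list nat) : Vec :=
  match w with
  | nil => x
  | i :: r => rcd_run nb D (upd nb x i (D x i)) r
  end.

(* Expectation of G(i_0,...,i_{l-1}) for i.i.d. indices uniform on {0,...,N-1} *)
Fixpoint expect_unif (N : nat) (l : nat) (G : list nat -> R) : R :=
  match l with
  | O => G nil
  | S m => / INR N * fsum N (fun i => expect_unif N m (fun r => G (i :: r)))
  end.

(* Main.v *)
Require Import Defs.
From Stdlib Require Import Reals Lra Lia List FunctionalExtensionality.
Open Scope R_scope.

Lemma fsum_ext n f g : (forall i, (i < n)%nat -> f i = g i) -> fsum n f = fsum n g.
Proof. induction n; simpl; intros H; auto. rewrite IHn by (intros; apply H; lia). rewrite H by lia. auto. Qed.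
Lemma fsum_le n f g : (forall i, (i < n)%nat -> f i <= g i) -> fsum n f <= fsum n g.
Proof. induction n; simpl; intros H; [lra|]. assert (f n <= g n) by (apply H; lia).
  assert (fsum n f <= fsum n g) by (apply IHn; intros; apply H; lia). lra. Qed.
Lemma fsum_plus n f g : fsum n (fun i => f i + g i) = fsum n f + fsum n g.
Proof. induction n; simpl; [lra|]. rewrite IHn; lra. Qed.
Lemma fsum_minus n f g : fsum n (fun i => f i - g i) = fsum n f - fsum n g.
Proof. induction n; simpl; [lra|]. rewrite IHn; lra. Qed.
Lemma fsum_scal n c f : fsum n (fun i => c * f i) = c * fsum n f.
Proof. induction n; simpl; [lra|]. rewrite IHn; lra. Qed.
Lemma fsum_const n c : fsum n (fun _ => c) = INR n * c.
Proof. induction n; simpl fsum; [simpl; lra|]. rewrite IHn, S_INR; lra. Qed.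
Lemma fsum_nonneg n f : (forall i, (i < n)%nat -> 0 <= f i) -> 0 <= fsum n f.
Proof. intros H. rewrite <- (Rmult_0_r (INR n)), <- fsum_const. apply fsum_le; auto. Qed.
Lemma fsum_single n i a b : (i < n)%nat ->
  fsum n (fun i' => if Nat.eqb i' i then a else b i') = fsum n b - b i + a.
Proof.
  induction n; simpl; intros H; [lia|].
  destruct (Nat.eqb_spec n i).
  - subst. rewrite (fsum_ext _ _ b). lra. intros j Hj. destruct (Nat.eqb_spec j i); [lia|auto].
  - rewrite IHn by lia. lra.
Qed.

Lemma binner_le m u v lam : 0 < lam ->
  binner m u v <= / (2 * lam) * bnorm2 m u + lam / 2 * bnorm2 m v.
Proof.
  intros Hl. unfold binner, bnorm2. rewrite <- !fsum_scal, <- fsum_plus.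
  apply fsum_le. intros j _.
  assert (0 <= (u j - lam * v j)^2) by apply pow2_ge_0.
  assert (u j * v j * (2*lam) <= (u j ^2 + lam^2 * v j ^2)) by (replace ((u j - lam * v j)^2) with (u j ^2 + lam^2 * v j ^2 - u j * v j * (2*lam)) in H by ring; lra).
  apply (Rmult_le_reg_r (2*lam)); [lra|].
  replace ((/ (2 * lam) * u j ^ 2 + lam / 2 * v j ^ 2) * (2 * lam)) with (u j ^2 + lam^2 * v j ^2) by (field; lra). lra.
Qed.

Definition evec (nb : nat -> nat) (i : nat) (s : BVec) (u : R) : Vec :=
  fun i' j => if andb (Nat.eqb i' i) (Nat.ltb j (nb i)) then u * s j else 0.
Definition yv nb x i (s : BVec) (t : R) := upd nb x i (fun j => t * s j).

Lemma vadd_evec nb x i s t u : vadd (yv nb x i s t) (evec nb i s u) = yv nb x i s (t + u).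
Proof. unfold vadd, yv, upd, evec. apply functional_extensionality; intro i'.
  apply functional_extensionality; intro j. destruct (andb _ _); ring. Qed.

Lemma inner_evec N nb G i s u : (i < N)%nat ->
  inner N nb G (evec nb i s u) = u * binner (nb i) (G i) s.
Proof.
  intros Hi. unfold inner.
  rewrite (fsum_ext _ _ (fun i' => if Nat.eqb i' i then u * binner (nb i) (G i) s else (fun _ => 0) i')).
  - rewrite fsum_single by auto. rewrite fsum_const. ring.
  - intros i' _. unfold evec, binner. destruct (Nat.eqb_spec i' i).
    + subst. rewrite <- fsum_scal. apply fsum_ext. intros j Hj.
      apply Nat.ltb_lt in Hj. rewrite Hj. simpl. ring.
    + transitivity (fsum (nb i') (fun _ => 0)); [apply fsum_ext; intros; simpl; ring | rewrite fsum_const; ring].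
Qed.

Lemma bnorm2_scal m c s : bnorm2 m (fun j => c * s j) = c^2 * bnorm2 m s.
Proof. unfold bnorm2. rewrite <- fsum_scal. apply fsum_ext. intros. ring. Qed.

Lemma bnorm2_nonneg m s : 0 <= bnorm2 m s.
Proof. apply fsum_nonneg. intros. apply pow2_ge_0. Qed.

Lemma vnorm_evec N nb i s u : (i < N)%nat ->
  vnorm N nb (evec nb i s u) = Rabs u * sqrt (bnorm2 (nb i) s).
Proof.
  intros Hi. unfold vnorm.
  rewrite (fsum_ext _ _ (fun i' => if Nat.eqb i' i then u^2 * bnorm2 (nb i) s else (fun _ => 0) i')).
  - rewrite fsum_single by auto. replace (fsum N (fun _ => 0) - 0 + u ^ 2 * bnorm2 (nb i) s)
      with (u^2 * bnorm2 (nb i) s) by (rewrite fsum_const; ring).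
    rewrite sqrt_mult. rewrite <- sqrt_Rsqr_abs. unfold Rsqr. f_equal. f_equal. ring.
    apply pow2_ge_0. apply bnorm2_nonneg.
  - intros i' _. unfold evec. destruct (Nat.eqb_spec i' i).
    + subst. rewrite <- bnorm2_scal. unfold bnorm2. apply fsum_ext. intros j Hj.
      apply Nat.ltb_lt in Hj. rewrite Hj. simpl. ring.
    + unfold bnorm2. transitivity (fsum (nb i') (fun _ => 0)); [apply fsum_ext; intros; simpl; ring | rewrite fsum_const; ring].
Qed.

Lemma deriv_phi N nb f g x i s t : (i < N)%nat -> has_gradient N nb f g ->
  derivable_pt_lim (fun t => f (yv nb x i s t)) t (binner (nb i) (g (yv nb x i s t) i) s).
Proof.
  intros Hi Hg eps Heps.
  set (S := sqrt (bnorm2 (nb i) s)).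
  assert (HS : 0 <= S) by apply sqrt_pos.
  destruct (Hg (yv nb x i s t) (eps / (2 * (S + 1)))) as [d0 [Hd0 Hd]].
  { apply Rdiv_lt_0_compat; lra. }
  assert (Hdp : 0 < d0 / (S + 1)) by (apply Rdiv_lt_0_compat; lra).
  exists (mkposreal _ Hdp). simpl. intros h Hh0 Hh.
  assert (Hah : 0 < Rabs h) by (apply Rabs_pos_lt; auto).
  specialize (Hd (evec nb i s h)).
  rewrite vnorm_evec, vadd_evec, inner_evec in Hd by auto.
  assert (Rabs h * S < d0).
  { apply Rlt_le_trans with (Rabs h * (S + 1)). nra.
    apply Rmult_lt_compat_r with (r := S + 1) in Hh; [|lra].
    unfold Rdiv in Hh. rewrite Rmult_assoc, Rinv_l in Hh by lra. lra. }
  specialize (Hd H). fold S in Hd.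
  set (l := binner (nb i) (g (yv nb x i s t) i) s) in *.
  replace ((f (yv nb x i s (t + h)) - f (yv nb x i s t)) / h - l)
    with ((f (yv nb x i s (t + h)) - f (yv nb x i s t) - h * l) * / h) by (field; auto).
  rewrite Rabs_mult, Rabs_inv.
  apply Rle_lt_trans with (eps / (2 * (S + 1)) * S).
  - apply (Rmult_le_reg_r (Rabs h)); auto.
    rewrite Rmult_assoc, Rinv_l by lra. lra.
  - apply (Rmult_lt_reg_r (2 * (S + 1))); [lra|].
    replace (eps / (2 * (S + 1)) * S * (2 * (S + 1))) with (eps * S) by (field; lra). nra.
Qed.

Lemma yv1 nb x i s : yv nb x i s 1 = upd nb x i s.
Proof. unfold yv, upd. apply functional_extensionality; intro i'.
  apply functional_extensionality; intro j. destruct (andb _ _); ring. Qed.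
Lemma yv0 nb x i s : yv nb x i s 0 = x.
Proof. unfold yv, upd. apply functional_extensionality; intro i'.
  apply functional_extensionality; intro j. destruct (andb _ _); ring. Qed.

Lemma descent N nb f g L x i s : (i < N)%nat -> has_gradient N nb f g ->
  block_lipschitz N nb g L -> 0 < L i ->
  f (upd nb x i s) <= f x + binner (nb i) (g x i) s + L i / 2 * bnorm2 (nb i) s.
Proof.
  intros Hi Hg Hlip HLi.
  set (B := bnorm2 (nb i) s). set (l0 := binner (nb i) (g x i) s).
  set (phi := fun t => f (yv nb x i s t)).
  set (P := plus_fct (mult_real_fct l0 id) (mult_real_fct (L i / 2 * B) (mult_fct id id))).
  destruct (MVT_cor2 (minus_fct phi P)
     (fun t => binner (nb i) (g (yv nb x i s t) i) s - (l0 * 1 + L i / 2 * B * (1 * id t + id t * 1))) 0 1)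
     as [c [Hc Hc01]]; [lra| |].
  { intros c _. apply derivable_pt_lim_minus. apply deriv_phi with N; auto.
    apply derivable_pt_lim_plus. apply derivable_pt_lim_scal, derivable_pt_lim_id.
    apply derivable_pt_lim_scal. apply derivable_pt_lim_mult; apply derivable_pt_lim_id. }
  unfold minus_fct, P, plus_fct, mult_real_fct, mult_fct, id, phi in Hc.
  rewrite yv1, yv0 in Hc.
  assert (Hb : binner (nb i) (g (yv nb x i s c) i) s - l0 <= L i * c * B).
  { unfold l0. 
    assert (E : binner (nb i) (g (yv nb x i s c) i) s - binner (nb i) (g x i) s
             = binner (nb i) (bsub (g (yv nb x i s c) i) (g x i)) s).
    { unfold binner, bsub. rewrite <- fsum_minus. apply fsum_ext. intros; ring. }
    rewrite E.
    assert (Hlam : 0 < L i * c) by nra.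
    eapply Rle_trans; [apply (binner_le _ _ _ (L i * c)); auto|].
    specialize (Hlip i x (fun j => c * s j) Hi). fold (yv nb x i s c) in Hlip.
    unfold bnorm in Hlip. rewrite bnorm2_scal in Hlip.
    set (W := bnorm2 (nb i) (bsub (g (yv nb x i s c) i) (g x i))) in *.
    assert (HW : 0 <= W) by apply bnorm2_nonneg.
    assert (HB : 0 <= B) by apply bnorm2_nonneg.
    rewrite sqrt_mult in Hlip by (try apply pow2_ge_0; auto).
    rewrite sqrt_pow2 in Hlip by lra. fold B in Hlip.
    assert (W <= (L i * c)^2 * B).
    { rewrite <- (sqrt_sqrt W) by auto. rewrite <- (sqrt_sqrt B) by auto.
      assert (0 <= sqrt W) by apply sqrt_pos. assert (0 <= sqrt B) by apply sqrt_pos.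
      assert (sqrt W * sqrt W <= (L i * (c * sqrt B)) * (L i * (c * sqrt B))).
      { apply Rmult_le_compat; auto. }
      nra. }
    apply Rle_trans with (/ (2 * (L i * c)) * ((L i * c) ^ 2 * B) + L i * c / 2 * B).
    - assert (0 < / (2 * (L i * c))) by (apply Rinv_0_lt_compat; lra).
      apply Rplus_le_compat_r. apply Rmult_le_compat_l; lra.
    - right. field. lra. }
  assert (HB : 0 <= B) by apply bnorm2_nonneg.
  assert (Hd : binner (nb i) (g (yv nb x i s c) i) s - (l0 * 1 + L i / 2 * B * (1 * c + c * 1)) <= 0) by nra.
  assert (f (upd nb x i s) - (l0 * 1 + L i / 2 * B * (1 * 1)) - (f x - (l0 * 0 + L i / 2 * B * (0 * 0))) <= 0).
  { rewrite Hc. nra. }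
  fold B l0. lra.
Qed.

Lemma hsum_upd N nb hb x i s : (i < N)%nat -> block_fun (nb i) (hb i) ->
  hsum N hb (upd nb x i s) = hsum N hb x - hb i (x i) + hb i (fun j => x i j + s j).
Proof.
  intros Hi Hf. unfold hsum.
  rewrite (fsum_ext _ _ (fun i' => if Nat.eqb i' i then hb i (fun j => x i j + s j) else hb i' (x i'))).
  - apply fsum_single; auto.
  - intros i' _. destruct (Nat.eqb_spec i' i).
    + subst. apply Hf. intros j Hj. unfold upd. rewrite Nat.eqb_refl.
      apply Nat.ltb_lt in Hj. rewrite Hj. reflexivity.
    + f_equal. apply functional_extensionality; intro j. unfold upd.
      apply Nat.eqb_neq in n. rewrite n. reflexivity.
Qed.

Definition sv (t : R) (d : Vec) : Vec := fun i j => t * d i j.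

Lemma inner_sv N nb G t d : inner N nb G (sv t d) = t * inner N nb G d.
Proof. unfold inner, binner, sv. rewrite <- fsum_scal. apply fsum_ext; intros.
  rewrite <- fsum_scal. apply fsum_ext; intros. ring. Qed.

Lemma Lnorm2_sv N nb L t d : Lnorm2 N nb L (sv t d) = t^2 * Lnorm2 N nb L d.
Proof. unfold Lnorm2, sv. rewrite <- fsum_scal. apply fsum_ext; intros.
  rewrite bnorm2_scal. ring. Qed.

Lemma Lnorm2_nonneg N nb L d : (forall i, (i < N)%nat -> 0 < L i) -> 0 <= Lnorm2 N nb L d.
Proof. intros H. apply fsum_nonneg. intros i Hi. specialize (H i Hi).
  assert (0 <= bnorm2 (nb i) (d i)) by apply bnorm2_nonneg. nra. Qed.

Lemma hsum_conv N nb hb x d t : (forall i, (i < N)%nat -> convex_on (nb i) (hb i)) -> 0 <= t <= 1 ->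
  hsum N hb (vadd x (sv t d)) <= t * hsum N hb (vadd x d) + (1 - t) * hsum N hb x.
Proof.
  intros Hc Ht. unfold hsum. rewrite <- !fsum_scal, <- fsum_plus. apply fsum_le. intros i Hi.
  replace (vadd x (sv t d) i) with (bcomb t (vadd x d i) (x i)).
  - apply Hc; auto.
  - unfold bcomb, vadd, sv. apply functional_extensionality; intro j. ring.
Qed.

Lemma strong N nb f g hb L x d :
  (forall i, (i < N)%nat -> 0 < L i) ->
  (forall i, (i < N)%nat -> convex_on (nb i) (hb i)) ->
  (forall s, full_model N nb f g (hsum N hb) L x d <= full_model N nb f g (hsum N hb) L x s) ->
  inner N nb (g x) d + hsum N hb (vadd x d) - hsum N hb x + Lnorm2 N nb L d <= 0.
Proof.
  intros HL Hc Hopt.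
  set (A := inner N nb (g x) d + hsum N hb (vadd x d) - hsum N hb x).
  set (B := Lnorm2 N nb L d).
  assert (HB : 0 <= B) by (apply Lnorm2_nonneg; auto).
  assert (Key : forall t, 0 <= t <= 1 -> A + B / 2 <= t * A + t^2 * B / 2).
  { intros t Ht. specialize (Hopt (sv t d)). unfold full_model in Hopt.
    rewrite inner_sv, Lnorm2_sv in Hopt.
    pose proof (hsum_conv N nb hb x d t Hc Ht). unfold A, B. lra. }
  destruct (Rle_or_lt (A + B) 0) as [H|H]; [lra|exfalso].
  set (u := Rmin 1 ((A + B) / (B + 1))).
  assert (Hu1 : u <= 1) by apply Rmin_l.
  assert (Hu2 : u <= (A + B) / (B + 1)) by apply Rmin_r.
  assert (Hu0 : 0 < u).
  { unfold u. apply Rmin_glb_lt; [lra|]. apply Rdiv_lt_0_compat; lra. }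
  specialize (Key (1 - u) ltac:(lra)).
  assert (Hk : u * (A + (2 - u) * B / 2) <= 0) by nra.
  assert (Hk2 : A + (2 - u) * B / 2 <= 0).
  { destruct (Rle_or_lt (A + (2 - u) * B / 2) 0); auto. nra. }
  assert (u * B <= (A + B) / (B + 1) * B) by nra.
  assert ((A + B) / (B + 1) * B < A + B).
  { apply (Rmult_lt_reg_r (B + 1)); [lra|].
    replace ((A + B) / (B + 1) * B * (B + 1)) with ((A + B) * B) by (field; lra). nra. }
  nra.
Qed.

Lemma M1sq N nb L dL x : (forall i, (i < N)%nat -> 0 < L i) ->
  M1 N nb L dL x ^ 2 = Lnorm2 N nb L (dL x).
Proof.
  intros HL. unfold M1, Ldualnorm, DL.
  assert (E : fsum N (fun i => / L i * bnorm2 (nb i) (fun j => L i * dL x i j)) = Lnorm2 N nb L (dL x)).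
  { unfold Lnorm2. apply fsum_ext. intros i Hi. rewrite bnorm2_scal. specialize (HL i Hi). field. lra. }
  rewrite E. rewrite pow2_sqrt; auto. apply Lnorm2_nonneg; auto.
Qed.

Lemma min_exists (b : nat -> R) k : exists l, (l <= k)%nat /\ forall l', (l' <= k)%nat -> b l <= b l'.
Proof.
  induction k.
  - exists 0%nat. split; auto. intros l' H. assert (l' = 0%nat) by lia. subst. lra.
  - destruct IHk as [l [Hl Hm]]. destruct (Rle_or_lt (b l) (b (S k))).
    + exists l. split; [lia|]. intros l' H'. destruct (Nat.eq_dec l' (S k)); [subst; auto|]. apply Hm; lia.
    + exists (S k). split; [lia|]. intros l' H'. destruct (Nat.eq_dec l' (S k)); [subst; lra|].
      specialize (Hm l' ltac:(lia)). lra.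
Qed.

Lemma exp_lower N l G c : (0 < N)%nat -> (forall w, c <= G w) -> c <= expect_unif N l G.
Proof.
  intros HN. revert G. induction l; intros G H; simpl; auto.
  assert (HN' : 0 < INR N) by (apply lt_0_INR; auto).
  apply Rle_trans with (/ INR N * (INR N * c)).
  - right. field. lra.
  - apply Rmult_le_compat_l. left. apply Rinv_0_lt_compat; auto.
    rewrite <- fsum_const. apply fsum_le. intros. apply IHl. intros; apply H.
Qed.

Theorem theorem2
  (N : nat) (nb : nat -> nat) (L : nat -> R)
  (f : Vec -> R) (g : Vec -> Vec) (hb : nat -> BVec -> R)
  (Fstar : R) (x0 : Vec)
  (D : Vec -> nat -> BVec) (dL : Vec -> Vec)
  (HN : (0 < N)%nat)
  (Hnb : forall i, (i < N)%nat -> (0 < nb i)%nat)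
  (HL : forall i, (i < N)%nat -> 0 < L i)
  (Hgrad : has_gradient N nb f g)
  (Hlip : block_lipschitz N nb g L)
  (Hhfun : forall i, (i < N)%nat -> block_fun (nb i) (hb i))
  (Hhconv : forall i, (i < N)%nat -> convex_on (nb i) (hb i))
  (Hhcont : forall i, (i < N)%nat -> continuous_on (nb i) (hb i))
  (HFlow : forall x, Fstar <= f x + hsum N hb x)
  (HFinf : forall eps, 0 < eps -> exists x, f x + hsum N hb x < Fstar + eps)
  (HD : forall x i, (i < N)%nat -> forall s : BVec,
      block_model nb f g (hsum N hb) L x i (D x i)
        <= block_model nb f g (hsum N hb) L x i s)
  (HdL : forall x (s : Vec),
      full_model N nb f g (hsum N hb) L x (dL x)
        <= full_model N nb f g (hsum N hb) L x s) :
  forall k : nat, exists l : nat, (l <= k)%nat /\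
    expect_unif N l (fun w => (M1 N nb L dL (rcd_run nb D x0 w)) ^ 2)
      <= 2 * INR N * (f x0 + hsum N hb x0 - Fstar) / INR (k + 1).
Proof.
  intros k.
  set (Fv := fun y => f y + hsum N hb y).
  assert (HN' : 0 < INR N) by (apply lt_0_INR; auto).
  assert (Dec : forall x, fsum N (fun i => Fv (upd nb x i (D x i)))
                 <= INR N * Fv x - / 2 * Lnorm2 N nb L (dL x)).
  { intros x.
    pose proof (strong N nb f g hb L x (dL x) HL Hhconv (HdL x)) as Hs.
    set (d := dL x) in *.
    apply Rle_trans with (fsum N (fun i => Fv x + (binner (nb i) (g x i) (d i)
         + L i / 2 * bnorm2 (nb i) (d i) + (hb i (fun j => x i j + d i j) - hb i (x i))))).
    - apply fsum_le. intros i Hi. unfold Fv.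
      pose proof (descent N nb f g L x i (D x i) Hi Hgrad Hlip (HL i Hi)).
      pose proof (HD x i Hi (d i)). unfold block_model in H0.
      rewrite (hsum_upd N nb hb x i (d i) Hi (Hhfun i Hi)) in H0. lra.
    - rewrite fsum_plus, fsum_const, !fsum_plus, fsum_minus.
      assert (E1 : fsum N (fun i => binner (nb i) (g x i) (d i)) = inner N nb (g x) d) by reflexivity.
      assert (E2 : fsum N (fun i => L i / 2 * bnorm2 (nb i) (d i)) = / 2 * Lnorm2 N nb L d).
      { unfold Lnorm2. rewrite <- fsum_scal. apply fsum_ext. intros. field. }
      assert (E3 : fsum N (fun i => hb i (fun j => x i j + d i j)) = hsum N hb (vadd x d)) by reflexivity.
      assert (E4 : fsum N (fun i => hb i (x i)) = hsum N hb x) by reflexivity.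
      rewrite E1, E2, E3, E4. lra. }
  set (a := fun l => expect_unif N l (fun w => Fv (rcd_run nb D x0 w))).
  set (b := fun l => expect_unif N l (fun w => M1 N nb L dL (rcd_run nb D x0 w) ^ 2)).
  assert (Step : forall l x, expect_unif N (S l) (fun w => Fv (rcd_run nb D x w))
     <= expect_unif N l (fun w => Fv (rcd_run nb D x w))
        - / (2 * INR N) * expect_unif N l (fun w => M1 N nb L dL (rcd_run nb D x w) ^ 2)).
  { induction l; intros x.
    - cbn [expect_unif rcd_run]. rewrite M1sq by auto.
      specialize (Dec x).
      apply Rle_trans with (/ INR N * (INR N * Fv x - / 2 * Lnorm2 N nb L (dL x))).
      + apply Rmult_le_compat_l; auto. left; apply Rinv_0_lt_compat; auto.
      + right. field. lra.
    - change (expect_unif N (S (S l)) (fun w => Fv (rcd_run nb D x w))) with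
        (/ INR N * fsum N (fun i => expect_unif N (S l) (fun r => Fv (rcd_run nb D (upd nb x i (D x i)) r)))).
      change (expect_unif N (S l) (fun w => Fv (rcd_run nb D x w))) with
        (/ INR N * fsum N (fun i => expect_unif N l (fun r => Fv (rcd_run nb D (upd nb x i (D x i)) r)))).
      change (expect_unif N (S l) (fun w => M1 N nb L dL (rcd_run nb D x w) ^ 2)) with
        (/ INR N * fsum N (fun i => expect_unif N l (fun r => M1 N nb L dL (rcd_run nb D (upd nb x i (D x i)) r) ^ 2))).
      set (c := / (2 * INR N)).
      rewrite <- Rmult_assoc, (Rmult_comm c), Rmult_assoc, <- Rmult_minus_distr_l.
      apply Rmult_le_compat_l. left; apply Rinv_0_lt_compat; auto.
      rewrite <- fsum_scal, <- fsum_minus. apply fsum_le. intros i _. apply IHl. }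
  assert (Tel : forall k, a (S k) <= a 0%nat - / (2 * INR N) * fsum (S k) b).
  { induction k0.
    - simpl fsum. specialize (Step 0%nat x0). unfold a, b. lra.
    - specialize (Step (S k0) x0). fold (a (S (S k0))) (a (S k0)) (b (S k0)) in Step.
      change (fsum (S (S k0)) b) with (fsum (S k0) b + b (S k0)). lra. }
  assert (Ha0 : a 0%nat = Fv x0) by reflexivity.
  assert (Hlow : Fstar <= a (S k)) by (apply exp_lower; [auto | intros; apply HFlow]).
  specialize (Tel k).
  destruct (min_exists b k) as [l [Hl Hm]].
  exists l. split; auto. fold (b l).
  assert (Hsum : INR (S k) * b l <= fsum (S k) b).
  { rewrite <- fsum_const. apply fsum_le. intros. apply Hm. lia. }
  assert (HK : 0 < INR (k + 1)) by (apply lt_0_INR; lia).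
  replace (k + 1)%nat with (S k) in * by lia.
  assert (Hc : / (2 * INR N) * fsum (S k) b <= Fv x0 - Fstar) by lra.
  assert (fsum (S k) b <= 2 * INR N * (Fv x0 - Fstar)).
  { apply (Rmult_le_reg_l (/ (2 * INR N))). apply Rinv_0_lt_compat; lra.
    replace (/ (2 * INR N) * (2 * INR N * (Fv x0 - Fstar))) with (Fv x0 - Fstar) by (field; lra). lra. }
  apply (Rmult_le_reg_l (INR (S k))); auto.
  replace (INR (S k) * (2 * INR N * (f x0 + hsum N hb x0 - Fstar) / INR (S k)))
    with (2 * INR N * (Fv x0 - Fstar)) by (unfold Fv; field; lra). lra.
Qed.
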